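(* Let $\mathcal G=(V_{\min},V_{\max},E,w,\lambda)$ be a discounted payoff game, not all of whose joint strategies are co-optimal, with contraction $\lambda^*$ and gap $\gamma$, and let $\mathcal G'=(V_{\min},V_{\max},E,w',\lambda)$ differ from $\mathcal G$ only in the edge weights, such that $|w_e-w'_e|\le\frac{1-\lambda^*}{3}\gamma$ for all $e\in E$. Then every joint strategy that is co-optimal for $\mathcal G'$ is also co-optimal for $\mathcal G$.
   Context: A discounted payoff game is a tuple $\mathcal G=(V_{\min},V_{\max},E,w,\lambda)$ with $V=V_{\min}\cup V_{\max}$ finite (disjoint union of Min and Max vertices), $E\subseteq V\times V$ with every vertex having an outgoing edge, $w:E\to\mathbb R$, $\lambda:E\to[0,1)$. The outcome of a play $e_0e_1\ldots$ is $\sum_{i\ge0}w_{e_i}\prod_{j<i}\lambda_{e_j}$. A joint strategy is a map $\sigma:V\to V$ with $(v,\sigma(v))\in E$; $\mathrm{val}(\sigma)(v)$ is the outcome of the play from $v$ following $\sigma$; the game value is $\mathrm{val}(\mathcal G)(v)=\sup_{\sigma_{\max}}\inf_{\sigma_{\min}}$ of the outcome from $v$ over positional strategies; $\sigma$ is co-optimal iff $\mathrm{val}(\sigma)=\mathrm{val}(\mathcal G)$. $\mathsf{offset}(x,(v,v'))=x(v)-(w_{(v,v')}+\lambda_{(v,v')}x(v'))$ if $v\in V_{\max}$, and $(w_{(v,v')}+\lambda_{(v,v')}x(v'))-x(v)$ otherwise. The contraction is $\lambda^*=\max\{\lambda_e\mid e\in E\}$. For a joint strategy $\sigma$ that is not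 co-optimal, $\gamma_\sigma=-\min\{\mathsf{offset}(\mathrm{val}(\sigma),e)\mid e\in E\}$ (which is $>0$); the gap $\gamma$ of $\mathcal G$ is the minimum of $\gamma_\sigma$ over all non-co-optimal joint strategies $\sigma$. *)

(* Defs.v *)
From HB Require Import structures.
From mathcomp Require Import all_boot all_order all_algebra.
From mathcomp Require Import all_classical all_reals all_analysis.
Set Implicit Arguments. Unset Strict Implicit. Unset Printing Implicit Defensive.
Import Order.TTheory GRing.Theory Num.Theory.
Import numFieldNormedType.Exports.
Local Open Scope classical_set_scope.
Local Open Scope ring_scope.

(* A discounted payoff game is given by: a finite vertex type V, a predicate
   isMax (V_max = isMax, V_min = complement), an edge relation E, edge weights
   w : V -> V -> R and discount factors lam : V -> V -> R (only their values on
   edges matter). *)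

Section DPG.
Variables (R : realType) (V : finType) (isMax : pred V) (E : rel V).

Definition dpg_wf (lam : V -> V -> R) :=
  (forall v, exists v', E v v') /\ (forall u v, E u v -> 0 <= lam u v < 1).

Definition joint_strategy (s : V -> V) := forall v, E v (s v).
Definition max_strategy (s : V -> V) := forall v, isMax v -> E v (s v).
Definition min_strategy (s : V -> V) := forall v, ~~ isMax v -> E v (s v).
Definition mix (smax smin : V -> V) : V -> V :=
  fun v => if isMax v then smax v else smin v.

Variables (w lam : V -> V -> R).

Definition play_term (s : V -> V) (v : V) (i : nat) : R :=
  w (iter i s v) (iter i.+1 s v) *
  \prod_(j < i) lam (iter j s v) (iter j.+1 s v).

Definition val_strat (s : V -> V) (v : V) : R := limn (series (play_term s v)).

Definition game_val (v : V) : R :=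
  sup [set r | exists2 smax, max_strategy smax &
     r = inf [set r' | exists2 smin, min_strategy smin &
                 r' = val_strat (mix smax smin) v]].

Definition co_optimal (s : V -> V) : Prop := forall v, val_strat s v = game_val v.

Definition offset (x : V -> R) (u v : V) : R :=
  if isMax u then x u - (w u v + lam u v * x v)
  else (w u v + lam u v * x v) - x u.

Definition gamma_strat (s : V -> V) : R :=
  - inf [set r | exists u v, E u v /\ r = offset (val_strat s) u v].

Definition gap : R :=
  inf [set r | exists s, [/\ joint_strategy s, ~ co_optimal s & r = gamma_strat s]].

End DPG.

Definition lam_star (R : realType) (V : finType) (E : rel V) (lam : V -> V -> R) : R :=
  sup [set r | exists u v, E u v /\ r = lam u v].

(* Main.v *)
Require Import Defs.
From HB Require Import structures.
From mathcomp Require Import all_boot all_order all_algebra.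
From mathcomp Require Import all_classical all_reals all_analysis.
From mathcomp Require Import ring lra.
Import Order.TTheory GRing.Theory Num.Theory.
Import numFieldNormedType.Exports.
Local Open Scope classical_set_scope.
Local Open Scope ring_scope.

Lemma fin_argmax (R : realType) (V : finType) (P : pred V) (f : V -> R) (v : V) :
  P v -> exists2 v0, P v0 & forall u, P u -> f u <= f v0.
Proof.
move=> Pv; case: (@arg_maxP _ _ V v P f Pv) => v0 Pv0 H; exists v0 => // u Pu; exact: H. Qed.

Lemma play_term0 (R : realType) (V : finType) (w lam : V -> V -> R) s v :
  play_term w lam s v 0 = w v (s v).
Proof. by rewrite /play_term big_ord0 mulr1. Qed.

Lemma play_termS (R : realType) (V : finType) (w lam : V -> V -> R) s v i :
  play_term w lam s v i.+1 = lam v (s v) * play_term w lam s (s v) i.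
Proof.
rewrite /play_term big_ord_recl /= -!iterSr.
under [in RHS]eq_bigr do rewrite -!iterSr.
rewrite mulrCA; congr (_ * _).
Qed.

Lemma series_play (R : realType) (V : finType) (w lam : V -> V -> R) s v n :
  series (play_term w lam s v) n.+1 =
  w v (s v) + lam v (s v) * series (play_term w lam s (s v)) n.
Proof.
rewrite !seriesEord /= big_ord_recl /= play_term0 mulr_sumr; congr (_ + _).
by apply: eq_bigr => i _; rewrite play_termS.
Qed.

Lemma play_cvg (R : realType) (V : finType) (E : rel V) (w lam : V -> V -> R) (c W : R) s v :
  0 <= c < 1 -> (forall u v, E u v -> 0 <= lam u v <= c) ->
  (forall u v, E u v -> `|w u v| <= W) -> joint_strategy E s ->
  cvgn (series (play_term w lam s v)).
Proof.
move=> /andP[c0 c1] hl hw js.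
have W0 : 0 <= W by apply: le_trans (hw _ _ (js v)).
apply: normed_cvg.
apply: (@series_le_cvg _ _ (geometric W c)).
- by move=> n; rewrite normr_ge0.
- by move=> n; rewrite /geometric mulr_ge0 // exprn_ge0.
- move=> n /=; rewrite /play_term normrM /geometric.
  apply: ler_pM => //.
    by apply: hw; rewrite iterS; apply: js.
  rewrite normr_prod; apply: (@le_trans _ _ (\prod_(i < n) c)); last first.
    by rewrite prodr_const card_ord.
  apply: ler_prod => i _.
  have := hl _ _ (js (iter i s v)); rewrite -iterS => /andP[h1 h2].
  by rewrite normr_ge0 ger0_norm.
- by apply: is_cvg_geometric_series; rewrite ger0_norm.
Qed.

Lemma val_eq (R : realType) (V : finType) (E : rel V) (w lam : V -> V -> R) (c W : R) s v :
  0 <= c < 1 -> (forall u v, E u v -> 0 <= lam u v <= c) ->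
  (forall u v, E u v -> `|w u v| <= W) -> joint_strategy E s ->
  val_strat w lam s v = w v (s v) + lam v (s v) * val_strat w lam s (s v).
Proof.
move=> hc hl hw js.
have hb := @play_cvg _ _ _ w lam _ _ s (s v) hc hl hw js.
rewrite /val_strat; apply: cvg_lim => //.
rewrite -cvg_shiftS.
have -> : [sequence series (play_term w lam s v) n.+1]_n =
   (fun n => w v (s v) + lam v (s v) * series (play_term w lam s (s v)) n).
  by apply: funext => n /=; rewrite series_play.
apply: cvgD; first exact: cvg_cst.
by apply: cvgMl_tmp.
Qed.
Set Implicit Arguments. Unset Strict Implicit.

Definition good (R : realType) (V : finType) (E : rel V) (w lam : V -> V -> R) (c W : R) :=
  [/\ 0 <= c < 1, (forall u v, E u v -> 0 <= lam u v <= c) &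
      (forall u v, E u v -> `|w u v| <= W)].

Lemma good_ex (R : realType) (V : finType) (E : rel V) (w lam : V -> V -> R) :
  (forall u v, E u v -> 0 <= lam u v < 1) -> exists c W, good E w lam c W.
Proof.
move=> hl.
exists (\big[Order.max/0]_(p : V * V | E p.1 p.2) lam p.1 p.2).
exists (\sum_(p : V * V) `|w p.1 p.2|).
split.
- apply/andP; split; first exact: bigmax_ge_id.
  by apply: bigmax_lt => // p /hl /andP[].
- move=> u v euv; have /andP[h0 _] := hl _ _ euv; rewrite h0 /=.
  exact: (@le_bigmax_cond _ _ _ _ (u, v) (fun p => E p.1 p.2) (fun p => lam p.1 p.2)).
- move=> u v _; rewrite (bigD1 (u, v)) //= lerDl sumr_ge0 // => p _.
Qed.

Lemma cmp_sub (R : realType) (V : finType) (E : rel V) (w lam : V -> V -> R) (c W : R) s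
  (y : V -> R) :
  good E w lam c W -> joint_strategy E s ->
  (forall v, y v <= w v (s v) + lam v (s v) * y (s v)) ->
  forall v, y v <= val_strat w lam s v.
Proof.
move=> [hc hl hw] js hy v.
pose d u := y u - val_strat w lam s u.
have hd : forall u, d u <= lam u (s u) * d (s u).
  move=> u; rewrite /d (@val_eq _ _ _ w lam c W s u hc hl hw js); have := hy u; lra.
have [v0 _ hv0] := @fin_argmax R V predT d v isT.
have : d v0 <= 0.
  have /andP[l0 l1] := hl _ _ (js v0).
  have h1 := hd v0; have h2 := hv0 (s v0) isT.
  have h3 : lam v0 (s v0) * d (s v0) <= lam v0 (s v0) * d v0 by rewrite ler_wpM2l.
  have /andP[_ hc1] := hc.
  nra.
have := hv0 v isT; rewrite /d; lra.
Qed.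

Lemma cmp_super (R : realType) (V : finType) (E : rel V) (w lam : V -> V -> R) (c W : R) s
  (y : V -> R) :
  good E w lam c W -> joint_strategy E s ->
  (forall v, w v (s v) + lam v (s v) * y (s v) <= y v) ->
  forall v, val_strat w lam s v <= y v.
Proof.
move=> [hc hl hw] js hy v.
pose d u := val_strat w lam s u - y u.
have hd : forall u, d u <= lam u (s u) * d (s u).
  move=> u; rewrite /d (@val_eq _ _ _ w lam c W s u hc hl hw js); have := hy u; lra.
have [v0 _ hv0] := @fin_argmax R V predT d v isT.
have : d v0 <= 0.
  have /andP[l0 l1] := hl _ _ (js v0).
  have h1 := hd v0; have h2 := hv0 (s v0) isT.
  have h3 : lam v0 (s v0) * d (s v0) <= lam v0 (s v0) * d v0 by rewrite ler_wpM2l.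
  nra.
have := hv0 v isT; rewrite /d; lra.
Qed.

Lemma val_bound (R : realType) (V : finType) (E : rel V) (w lam : V -> V -> R) (c W : R) s v :
  good E w lam c W -> joint_strategy E s ->
  - (W / (1 - c)) <= val_strat w lam s v <= W / (1 - c).
Proof.
move=> g js; have [hc hl hw] := g; have /andP[c0 c1] := hc.
have W0 : 0 <= W by apply: le_trans (hw _ _ (js v)).
have c1' : 0 < 1 - c by lra.
have K0 : 0 <= W / (1 - c) by rewrite divr_ge0 // ltW.
have KE : W / (1 - c) * (1 - c) = W by rewrite divfK // gt_eqF.
apply/andP; split.
- apply: (cmp_sub (y := fun _ => - (W / (1 - c))) g js) => x.
  have := hw _ _ (js x); have /andP[l0 l1] := hl _ _ (js x).
  rewrite ler_norml => /andP[h1 h2].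
  have : lam x (s x) * (W / (1 - c)) <= c * (W / (1 - c)) by rewrite ler_wpM2r.
  nra.
- apply: (cmp_super (y := fun _ => (W / (1 - c))) g js) => x.
  have := hw _ _ (js x); have /andP[l0 l1] := hl _ _ (js x).
  rewrite ler_norml => /andP[h1 h2].
  have : lam x (s x) * (W / (1 - c)) <= c * (W / (1 - c)) by rewrite ler_wpM2r.
  nra.
Qed.

Lemma mix_joint (V : finType) (isMax : pred V) (E : rel V) t p :
  max_strategy isMax E t -> min_strategy isMax E p -> joint_strategy E (mix isMax t p).
Proof. by move=> ht hp v; rewrite /mix; case: ifP => h; [apply: ht | apply: hp; rewrite h]. Qed.

Definition bell (R : realType) (V : finType) (isMax : pred V) (E : rel V) (w lam : V -> V -> R)
  (y : V -> R) := forall u v, E u v -> 0 <= offset isMax w lam y u v.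

Lemma char (R : realType) (V : finType) (isMax : pred V) (E : rel V) (w lam : V -> V -> R)
  (c W : R) s :
  good E w lam c W -> joint_strategy E s -> bell isMax E w lam (val_strat w lam s) ->
  forall v, game_val isMax E w lam v = val_strat w lam s v.
Proof.
move=> g js hb v.
set y := val_strat w lam s.
have smax : max_strategy isMax E s by move=> x _; apply: js.
have smin : min_strategy isMax E s by move=> x _; apply: js.
have hl := g; case: hl => hc hl hw.
pose S t := [set r' | exists2 p, min_strategy isMax E p & r' = val_strat w lam (mix isMax t p) v].
have up : forall t, max_strategy isMax E t -> inf (S t) <= y v.
  move=> t ht.
  have hS : S t (val_strat w lam (mix isMax t s) v) by exists s.
  have hlb : has_lbound (S t).
    exists (- (W / (1 - c))) => r [p hp ->].
    by have /andP[] := val_bound v g (mix_joint ht hp).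
  apply: le_trans (ge_inf hlb hS) _.
  apply: (cmp_super g (mix_joint ht smin)) => x; rewrite /mix.
  case: ifP => hx.
    by have := hb _ _ (ht x hx); rewrite /offset hx subr_ge0.
  by rewrite /y [in X in _ <= X](@val_eq _ _ _ w lam c W s x hc hl hw js).
have lo : y v <= inf (S s).
  apply: lb_le_inf; first by exists (val_strat w lam (mix isMax s s) v); exists s.
  move=> r [p hp ->]; apply: (cmp_sub g (mix_joint smax hp)) => x; rewrite /mix.
  case: ifP => hx.
    by rewrite /y [in X in X <= _](@val_eq _ _ _ w lam c W s x hc hl hw js).
  by have := hb _ _ (hp x (negbT hx)); rewrite /offset hx subr_ge0.
rewrite /game_val -/S; apply/eqP; rewrite eq_le; apply/andP; split.
  apply: ge_sup; first by exists (inf (S s)); exists s.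
  by move=> r [t ht ->]; apply: up.
apply: (le_trans lo); apply: ub_le_sup; last by exists s.
by exists (y v) => r [t ht ->]; apply: up.
Qed.

Lemma fin_argmin (R : realType) (V : finType) (P : pred V) (f : V -> R) (v : V) :
  P v -> exists2 v0, P v0 & forall u, P u -> f v0 <= f u.
Proof.
move=> Pv; case: (@arg_minP _ _ V v P f Pv) => v0 Pv0 H; exists v0 => // u Pu; exact: H.
Qed.

Definition maxS (V : finType) (isMax : pred V) (E : rel V) (f : {ffun V -> V}) :=
  [forall v, isMax v ==> E v (f v)].
Definition minS (V : finType) (isMax : pred V) (E : rel V) (f : {ffun V -> V}) :=
  [forall v, ~~ isMax v ==> E v (f v)].

Lemma maxSP (V : finType) (isMax : pred V) (E : rel V) f :
  maxS isMax E f -> max_strategy isMax E f.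
Proof. by move=> /forallP h v hv; have /implyP := h v; apply. Qed.
Lemma minSP (V : finType) (isMax : pred V) (E : rel V) f :
  minS isMax E f -> min_strategy isMax E f.
Proof. by move=> /forallP h v hv; have /implyP := h v; apply. Qed.

Definition upd (V : finType) (f : {ffun V -> V}) u v' : {ffun V -> V} :=
  [ffun x => if x == u then v' else f x].

Lemma sum_strict (R : realType) (V : finType) (F G : V -> R) u :
  (forall x, F x <= G x) -> F u < G u -> \sum_x F x < \sum_x G x.
Proof.
move=> hle hlt; rewrite (bigD1 u) // [X in _ < X](bigD1 u) //=.
by apply: ltr_leD => //; apply: ler_sum.
Qed.

Definition minbell (R : realType) (V : finType) (isMax : pred V) (E : rel V)
  (w lam : V -> V -> R) (y : V -> R) :=
  forall u v', ~~ isMax u -> E u v' -> y u <= w u v' + lam u v' * y v'.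

Lemma br (R : realType) (V : finType) (isMax : pred V) (E : rel V) (w lam : V -> V -> R)
  (c W : R) (f0 : {ffun V -> V}) (t : V -> V) :
  good E w lam c W -> (forall v, E v (f0 v)) -> max_strategy isMax E t ->
  exists p : {ffun V -> V}, minS isMax E p /\
     minbell isMax E w lam (val_strat w lam (mix isMax t p)).
Proof.
move=> g hf0 ht; have [hc hl hw] := g.
pose F (p : {ffun V -> V}) := \sum_x val_strat w lam (mix isMax t p) x.
have hf0' : minS isMax E f0 by apply/forallP => v; apply/implyP => _.
have [p hp hmin] := @fin_argmin R _ (minS isMax E) F f0 hf0'.
exists p; split => // u v' hu e.
set y := val_strat w lam (mix isMax t p).
rewrite leNgt; apply/negP => hlt.
pose p' := upd p u v'.
have hp' : minS isMax E p'.
  apply/forallP => x; apply/implyP => hx; rewrite /p' /upd ffunE.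
  case: eqP => [->|_] //; exact: (minSP hp).
have js' := mix_joint ht (minSP hp').
have js := mix_joint ht (minSP hp).
have ey x : y x = w x (mix isMax t p x) + lam x (mix isMax t p x) * y (mix isMax t p x).
  exact: (@val_eq _ _ _ w lam c W _ x hc hl hw js).
have hle : forall x, val_strat w lam (mix isMax t p') x <= y x.
  apply: (cmp_super g js') => x; rewrite [in X in _ <= X](ey x) /mix.
  case: ifP => hx //.
  rewrite /p' /upd ffunE; case: eqP => [exu|] //.
  subst x; apply: le_trans (ltW hlt) _; rewrite (ey u) /mix hx //.
have hu' : val_strat w lam (mix isMax t p') u < y u.
  have hm : mix isMax t p' u = v' by rewrite /mix (negbTE hu) /p' /upd ffunE eqxx.
  rewrite (@val_eq _ _ _ w lam c W _ u hc hl hw js') hm.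
  apply: le_lt_trans hlt; rewrite lerD2l; apply: ler_wpM2l.
    by have /andP[] := hl _ _ e.
  exact: hle.
have := hmin p' hp'; rewrite /F leNgt => /negP; apply.
exact: sum_strict hle hu'.
Qed.

Lemma equil (R : realType) (V : finType) (isMax : pred V) (E : rel V) (w lam : V -> V -> R)
  (c W : R) (f0 : {ffun V -> V}) :
  good E w lam c W -> (forall v, E v (f0 v)) ->
  exists t p, [/\ max_strategy isMax E t, min_strategy isMax E p &
     bell isMax E w lam (val_strat w lam (mix isMax t p))].
Proof.
move=> g hf0; have [hc hl hw] := g.
have hbr : forall t : {ffun V -> V}, exists p : {ffun V -> V},
    maxS isMax E t -> minS isMax E p /\ minbell isMax E w lam (val_strat w lam (mix isMax t p)).
  move=> t; case: (boolP (maxS isMax E t)) => ht.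
    by have [p hp] := br g hf0 (maxSP ht); exists p.
  by exists t.
have [f hf] := choice hbr.
pose G (t : {ffun V -> V}) := \sum_x val_strat w lam (mix isMax t (f t)) x.
have hf0' : maxS isMax E f0 by apply/forallP => v; apply/implyP => _.
have [t ht hmax] := @fin_argmax R _ (maxS isMax E) G f0 hf0'.
have [hpf hmb] := hf t ht.
exists t, (f t); split; [exact: maxSP | exact: minSP |].
set y := val_strat w lam (mix isMax t (f t)).
have js := mix_joint (maxSP ht) (minSP hpf).
have ey x : y x = w x (mix isMax t (f t) x) + lam x (mix isMax t (f t) x) * y (mix isMax t (f t) x).
  exact: (@val_eq _ _ _ w lam c W _ x hc hl hw js).
move=> u v' e; rewrite /offset; case: ifP => hu; last first.
  by rewrite subr_ge0; apply: hmb => //; rewrite hu.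
rewrite subr_ge0 leNgt; apply/negP => hlt.
pose t' := upd t u v'.
have ht' : maxS isMax E t'.
  apply/forallP => x; apply/implyP => hx; rewrite /t' /upd ffunE.
  case: eqP => [->|_] //; exact: (maxSP ht).
have [hp' hmb'] := hf t' ht'.
have js' := mix_joint (maxSP ht') (minSP hp').
have hle : forall x, y x <= val_strat w lam (mix isMax t' (f t')) x.
  apply: (cmp_sub g js') => x; rewrite /mix; case: ifP => hx.
    rewrite /t' /upd ffunE; case: eqP => [exu|_].
      by subst x; apply: ltW.
    by rewrite (ey x) /mix hx.
  by apply: hmb => //; [rewrite hx | apply: (minSP hp'); rewrite hx].
have hu' : y u < val_strat w lam (mix isMax t' (f t')) u.
  have hm : mix isMax t' (f t') u = v' by rewrite /mix hu /t' /upd ffunE eqxx.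
  rewrite (@val_eq _ _ _ w lam c W _ u hc hl hw js') hm.
  apply: lt_le_trans hlt _; rewrite lerD2l; apply: ler_wpM2l.
    by have /andP[] := hl _ _ e.
  exact: hle.
have := hmax t' ht'; rewrite /G leNgt => /negP; apply.
exact: sum_strict hle hu'.
Qed.

Lemma gv_bell (R : realType) (V : finType) (isMax : pred V) (E : rel V) (w lam : V -> V -> R)
  (c W : R) (f0 : {ffun V -> V}) :
  good E w lam c W -> (forall v, E v (f0 v)) ->
  bell isMax E w lam (game_val isMax E w lam).
Proof.
move=> g hf0; have [t [p [ht hp hb]]] := equil isMax g hf0.
have js := mix_joint ht hp.
have -> : game_val isMax E w lam = val_strat w lam (mix isMax t p).
  by apply: funext => v; apply: (char g js hb).
exact: hb.
Qed.

Unset Implicit Arguments. Set Strict Implicit.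

Theorem lemma4p5 (R : realType) (V : finType) (isMax : pred V) (E : rel V)
    (w w' lam : V -> V -> R) :
  dpg_wf E lam ->
  (exists s, joint_strategy E s /\ ~ co_optimal isMax E w lam s) ->
  (forall u v, E u v ->
     `|w u v - w' u v| <= (1 - lam_star E lam) / 3 * gap isMax E w lam) ->
  forall s, joint_strategy E s -> co_optimal isMax E w' lam s ->
    co_optimal isMax E w lam s.
Proof.
move=> [htot hl01] _ hw s js hco'.
have [c [W g]] := good_ex w hl01.
have [c' [W' g']] := good_ex w' hl01.
have [hc hl _] := g.
have [f0 hf0] : exists f0 : {ffun V -> V}, forall v, E v (f0 v).
  exists [ffun v => odflt v [pick v' | E v v']] => v; rewrite ffunE.
  case: pickP => //= h; have [v' e] := htot v; by rewrite h in e.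
have hB' := gv_bell isMax g' hf0.
have hx' : game_val isMax E w' lam = val_strat w' lam s by apply: funext => v; rewrite hco'.
rewrite hx' in hB'.
apply: contrapT => hn.
have [v1 _] : exists v1, val_strat w lam s v1 <> game_val isMax E w lam v1.
  apply: contrapT => h; apply: hn => v; apply: contrapT => h'; apply: h; by exists v.
set lst := lam_star E lam; set gp := gap isMax E w lam.
set dl := (1 - lst) / 3 * gp.
have e1 := js v1.
have hub : has_ubound [set r | exists u v, E u v /\ r = lam u v].
  by exists 1 => r [u [v [e ->]]]; have /andP[_ /ltW] := hl01 _ _ e.
have lam_le : forall u v, E u v -> lam u v <= lst.
  by move=> u v e; apply: (ub_le_sup hub); exists u, v.
have lst1 : lst <= 1.
  apply: ge_sup; first by exists (lam v1 (s v1)), v1, (s v1).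
  by move=> r [u [v [e ->]]]; have /andP[_ /ltW] := hl01 _ _ e.
have lst0 : 0 <= lst.
  by apply: le_trans (lam_le _ _ e1); have /andP[] := hl01 _ _ e1.
have dl0 : 0 <= dl := le_trans (normr_ge0 _) (hw _ _ e1).
have [dle|dlt] := leP dl 0.
  have weq : forall u v, E u v -> w u v = w' u v.
    move=> u v e; have := hw _ _ e; rewrite -/lst -/gp -/dl => h.
    by apply/eqP; rewrite -subr_eq0 -normr_le0 (le_trans h).
  have [hc' hl' _] := g'.
  have veq : forall x, val_strat w' lam s x = w x (s x) + lam x (s x) * val_strat w' lam s (s x).
    by move=> x; rewrite (@val_eq _ _ _ w' lam c' W' s x hc' hl' _ js) ?weq //; case: g'.
  have vv : val_strat w lam s = val_strat w' lam s.
    apply: funext => x; apply/eqP; rewrite eq_le; apply/andP; split.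
      by apply: (cmp_super g js) => y; rewrite [X in _ <= X]veq.
    by apply: (cmp_sub g js) => y; rewrite [X in X <= _]veq.
  apply: hn => x; apply/esym; apply: (char g js); rewrite vv => u v e.
  by have := hB' _ _ e; rewrite /offset weq.
have l1 : 0 < 1 - lst.
  rewrite subr_gt0 lt_neqAle lst1 andbT; apply/eqP => h.
  by move: dlt; rewrite /dl h subrr mul0r mul0r ltxx.
have gp0 : 0 < gp by move: dlt; rewrite /dl pmulr_rgt0 // divr_gt0.
have hgam : gp <= gamma_strat isMax E w lam s.
  have [hlb|nlb] := pselect (has_lbound [set r | exists s0, [/\ joint_strategy E s0,
       ~ co_optimal isMax E w lam s0 & r = gamma_strat isMax E w lam s0]]).
    by apply: (ge_inf hlb); exists s; split.
  have : gp = 0 by rewrite /gp /gap inf_out // => -[_ ?].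
  lra.
rewrite /gamma_strat in hgam.
set O := [set r | exists u v, E u v /\ r = offset isMax w lam (val_strat w lam s) u v] in hgam.
have [r [u [v [e ->]]] hr] : exists2 r, O r & r < - gp + gp / 3.
  apply: inf_lt; first by exists (offset isMax w lam (val_strat w lam s) v1 (s v1)), v1, (s v1).
  lra.
have hD : forall x, `|val_strat w lam s x - val_strat w' lam s x| <= gp / 3.
  pose D x := `|val_strat w lam s x - val_strat w' lam s x|.
  have [x0 _ hx0] := @fin_argmax R V predT D v1 isT.
  suff : D x0 <= gp / 3 by move=> h x; apply: le_trans h; apply: hx0.
  have [hc' hl' hw'] := g'.
  have ex : D x0 = `|(w x0 (s x0) - w' x0 (s x0)) + lam x0 (s x0) *
      (val_strat w lam s (s x0) - val_strat w' lam s (s x0))|.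
    rewrite /D (@val_eq _ _ _ w lam c W s x0 hc hl _ js); last by case: g.
    rewrite (@val_eq _ _ _ w' lam c' W' s x0 hc' hl' hw' js).
    congr `|_|; ring.
  have h1 : D x0 <= dl + lst * D x0.
    rewrite {1}ex; apply: le_trans (ler_normD _ _) _; apply: lerD; first exact: (hw _ _ (js x0)).
    have /andP[h0 _] := hl01 _ _ (js x0).
    rewrite normrM ger0_norm //; apply: ler_pM => //; first exact: lam_le.
    exact: (hx0 (s x0) isT).
  have h2 : (1 - lst) * D x0 <= (1 - lst) * (gp / 3).
    have -> : (1 - lst) * (gp / 3) = dl by rewrite /dl; field.
    lra.
  by rewrite ler_pM2l in h2.
have hB := hB' _ _ e.
have hwe := hw _ _ e; rewrite -/lst -/gp -/dl in hwe.
have /andP[lv0 _] := hl01 _ _ e.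
have lvl := lam_le _ _ e.
have hDu := hD u; have hDv := hD v.
have hlv : `|lam u v * (val_strat w lam s v - val_strat w' lam s v)| <= lst * (gp / 3).
  by rewrite normrM ger0_norm // ler_pM.
have dle : dl + lst * (gp / 3) = gp / 3 by rewrite /dl; field.
move: hr hB hwe hDu hDv hlv; rewrite /offset; case: (isMax u);
  rewrite !ler_norml => hr hB /andP[? ?] /andP[? ?] /andP[? ?] /andP[? ?]; nra.
Qed.
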